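(* Let $f,g,\beta$ be functions with $\lim_{x\to\infty}f(x)=\lim_{x\to\infty}g(x)=\lim_{x\to\infty}\beta(x)=\infty$. If a problem $\Pi_0$ is $(f,g)$-FPT gap reducible to a problem $\Pi_1$ and $\Pi_0$ is $\beta$-weakly inherently enumerative, then there is a constant $c>0$ such that $\Pi_1$ is $(c\cdot\beta\circ g)$-weakly inherently enumerative.
   Context: An optimization problem $\Pi$ has instances $I$ with optimum value $\mathrm{OPT}_\Pi(I)$. $O_{q,r}(\cdot)$ hides a multiplicative factor depending only on $q,r$. $\Pi_0$ is $(f,g)$-FPT gap reducible to $\Pi_1$ if there is an algorithm that takes an instance $I_0$ of $\Pi_0$ and integers $q,r$, runs in time $t(q,r)\cdot|I_0|^{O(1)}$ for some computable $t$, and produces an instance $I_1$ of $\Pi_1$ such that: for every positive integer $q$, if $\mathrm{OPT}_{\Pi_0}(I_0)\ge q$ then $\mathrm{OPT}_{\Pi_1}(I_1)\ge f(q)$; and for every positive integer $r$, if $\mathrm{OPT}_{\Pi_0}(I_0)<g(r)$ then $\mathrm{OPT}_{\Pi_1}(I_1)<r$. For $\beta$ with $\beta(r)\to\infty$, $\Pi$ is $\beta$-weakly inherently enumerative if there is a constant $r_0>0$ such that for all integers $q\ge r\ge r_0$ no algorithm can, on every instance $I$, decide whether $\mathrm{OPT}_\Pi(I)<r$ or $\mathrm{OPT}_\Pi(I)\ge q$ in time $O_{q,r}(|I|^{\beta(r)})$. *)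

(* Defs.v *)
From Stdlib Require Import Reals Lra Lia List Arith.
Import ListNotations.
Open Scope R_scope.

(** * A concrete model of computation: a WHILE-language over registers
    holding bit strings (Jones-style), with unit-cost steps. *)

Definition state := nat -> list bool.

Definition upd (s : state) (i : nat) (v : list bool) : state :=
  fun j => if Nat.eqb j i then v else s j.

Inductive cmd : Type :=
| CCons  (i : nat) (b : bool)
| CTail  (i : nat)
| CCopy  (i j : nat)
| CSeq   (c1 c2 : cmd)
| CIf    (i : nat) (c1 c2 : cmd)
| CWhile (i : nat) (c : cmd).

Inductive exec : cmd -> state -> state -> nat -> Prop :=
| ECons i b s : exec (CCons i b) s (upd s i (b :: s i)) 1
| ETail i s : exec (CTail i) s (upd s i (tl (s i))) 1
| ECopy i j s : exec (CCopy i j) s (upd s i (s j)) 1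
| ESeq c1 c2 s1 s2 s3 n1 n2 :
    exec c1 s1 s2 n1 -> exec c2 s2 s3 n2 -> exec (CSeq c1 c2) s1 s3 (n1 + n2)
| EIfT i c1 c2 s s' n :
    hd false (s i) = true -> exec c1 s s' n -> exec (CIf i c1 c2) s s' (S n)
| EIfF i c1 c2 s s' n :
    hd false (s i) = false -> exec c2 s s' n -> exec (CIf i c1 c2) s s' (S n)
| EWhileF i c s : s i = [] -> exec (CWhile i c) s s 1
| EWhileT i c s s1 s2 n1 n2 :
    s i <> [] -> exec c s s1 n1 -> exec (CWhile i c) s1 s2 n2 ->
    exec (CWhile i c) s s2 (S (n1 + n2)).

(** Initial states: inputs in registers 0,1,2,...; all others empty.
    Output is read from register 0. *)
Definition init1 (x : list bool) : state :=
  fun j => match j with 0%nat => x | _ => [] end.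
Definition init2 (x y : list bool) : state :=
  fun j => match j with 0%nat => x | 1%nat => y | _ => [] end.
Definition init3 (x y z : list bool) : state :=
  fun j => match j with 0%nat => x | 1%nat => y | 2%nat => z | _ => [] end.

Definition unary (n : nat) : list bool := repeat true n.

Definition computable2 (t : nat -> nat -> nat) : Prop :=
  exists P : cmd, forall q r : nat, exists s n,
    exec P (init2 (unary q) (unary r)) s n /\ s 0%nat = unary (t q r).

Record opt_problem : Type := { OPT : list bool -> nat }.

Definition fpt_gap_reducible (P0 P1 : opt_problem) (f g : nat -> nat) : Prop :=
  exists (Red : cmd) (t : nat -> nat -> nat) (d : nat),
    computable2 t /\
    forall (I0 : list bool) (q r : nat), exists s n,
      exec Red (init3 I0 (unary q) (unary r)) s n /\
      (n <= t q r * (S (length I0)) ^ d)%nat /\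
      ((0 < q)%nat -> (q <= OPT P0 I0)%nat -> (f q <= OPT P1 (s 0%nat))%nat) /\
      ((0 < r)%nat -> (OPT P0 I0 < g r)%nat -> (OPT P1 (s 0%nat) < r)%nat).

(** Program [A] decides the gap problem "OPT < r  vs  OPT >= q" of [P]
    (answer = head of register 0, true meaning OPT >= q) on every instance,
    in time O_{q,r}(|I|^e). *)
Definition decides_gap_in_time (P : opt_problem) (A : cmd) (q r : nat) (e : R)
  : Prop :=
  exists (C : R) (n0 : nat), forall I : list bool, exists s n,
    exec A (init1 I) s n /\
    ((OPT P I < r)%nat -> hd false (s 0%nat) = false) /\
    ((q <= OPT P I)%nat -> hd false (s 0%nat) = true) /\
    ((n0 <= length I)%nat -> INR n <= C * Rpower (INR (length I)) e).

Definition weakly_inherently_enumerative (P : opt_problem) (beta : nat -> R)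
  : Prop :=
  exists r0 : nat, (0 < r0)%nat /\
    forall q r : nat, (r0 <= r)%nat -> (r <= q)%nat ->
      ~ (exists A : cmd, decides_gap_in_time P A q r (beta r)).

Definition tends_to_infty_nat (h : nat -> nat) : Prop :=
  forall M : nat, exists N : nat, forall x : nat, (N <= x)%nat -> (M <= h x)%nat.

Definition tends_to_infty_R (h : nat -> R) : Prop :=
  forall M : R, exists N : nat, forall x : nat, (N <= x)%nat -> M <= h x.

(* Main.v *)
Require Import Defs.
From Stdlib Require Import Reals Lra Lia List Arith FunctionalExtensionality.
Import ListNotations.
Open Scope nat_scope.
Fixpoint sh (K : nat) (c : cmd) : cmd :=
  match c with
  | CCons i b => CCons (i+K) b
  | CTail i => CTail (i+K)
  | CCopy i j => CCopy (i+K) (j+K)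
  | CSeq a b => CSeq (sh K a) (sh K b)
  | CIf i a b => CIf (i+K) (sh K a) (sh K b)
  | CWhile i a => CWhile (i+K) (sh K a)
  end.

Lemma upd_sh s i K v j : upd s (i+K) v (j+K) = upd (fun j => s (j+K)) i v j.
Proof. unfold upd. destruct (Nat.eqb_spec (j+K) (i+K)), (Nat.eqb_spec j i); lia || auto. Qed.

Lemma sh_exec K c s1 s2 n : exec c s1 s2 n -> forall s, (forall j, s (j+K)%nat = s1 j) ->
  exists s', exec (sh K c) s s' n /\ forall j, s' (j+K)%nat = s2 j.
Proof.
  induction 1; intros s0 Hs; simpl.
  - eexists; split; [constructor|]. intro jj. rewrite upd_sh. unfold upd.
    destruct (Nat.eqb jj i); rewrite ?Hs; auto.
  - eexists; split; [constructor|]. intro jj. rewrite upd_sh. unfold upd.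
    destruct (Nat.eqb jj i); rewrite ?Hs; auto.
  - eexists; split; [constructor|]. intro jj. rewrite upd_sh. unfold upd.
    destruct (Nat.eqb jj i); rewrite ?Hs; auto.
  - destruct (IHexec1 s0 Hs) as [sa [Ea Ha]]. destruct (IHexec2 sa Ha) as [sb [Eb Hb]].
    exists sb; split; [econstructor; eauto | auto].
  - destruct (IHexec s0 Hs) as [sa [Ea Ha]]. exists sa; split; auto.
    apply EIfT; auto. rewrite Hs; auto.
  - destruct (IHexec s0 Hs) as [sa [Ea Ha]]. exists sa; split; auto.
    apply EIfF; auto. rewrite Hs; auto.
  - exists s0; split; auto. apply EWhileF. rewrite Hs; auto.
  - destruct (IHexec1 s0 Hs) as [sa [Ea Ha]]. destruct (IHexec2 sa Ha) as [sb [Eb Hb]].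
    exists sb; split; auto. eapply EWhileT; eauto. rewrite Hs; auto.
Qed.

Fixpoint maxreg (c : cmd) : nat :=
  match c with
  | CCons i _ => i | CTail i => i | CCopy i j => Nat.max i j
  | CSeq a b => Nat.max (maxreg a) (maxreg b)
  | CIf i a b => Nat.max i (Nat.max (maxreg a) (maxreg b))
  | CWhile i a => Nat.max i (maxreg a)
  end.

Lemma exec_unch c s s' n : exec c s s' n -> forall x, (maxreg c < x)%nat -> s' x = s x.
Proof.
  induction 1; intros x Hx; simpl in Hx; unfold upd; try (destruct (Nat.eqb_spec x i); [lia|reflexivity]); auto.
  - rewrite IHexec2, IHexec1; auto; lia.
  - apply IHexec; lia.
  - apply IHexec; lia.
  - rewrite IHexec2, IHexec1; simpl; auto; lia.
Qed.

Lemma exec_len c s s' n : exec c s s' n -> forall L, (forall y, (length (s y) <= L)%nat) ->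
  forall x, (length (s' x) <= L + n)%nat.
Proof.
  induction 1; intros L HL x; unfold upd; try (destruct (Nat.eqb x i); simpl; [|specialize (HL x); lia]).
  - specialize (HL i); lia.
  - specialize (HL i); destruct (s i); simpl in *; lia.
  - specialize (HL j); lia.
  - specialize (IHexec1 L HL). specialize (IHexec2 _ IHexec1 x). lia.
  - specialize (IHexec L HL x); lia.
  - specialize (IHexec L HL x); lia.
  - specialize (HL x); lia.
  - specialize (IHexec1 L HL). specialize (IHexec2 _ IHexec1 x). lia.
Qed.

Lemma rep_app k (l:list bool) : repeat true k ++ true :: l = true :: repeat true k ++ l.
Proof. induction k; simpl; auto. rewrite IHk. auto. Qed.

Fixpoint consq (i k : nat) : cmd :=
  match k with 0%nat => CCopy i i | S k' => CSeq (CCons i true) (consq i k') end.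

Lemma consq_exec i k : forall s, exists s', exec (consq i k) s s' (S k) /\
  s' i = repeat true k ++ s i /\ forall j, j <> i -> s' j = s j.
Proof.
  induction k; intro s; simpl.
  - eexists; split; [constructor|]. unfold upd; rewrite Nat.eqb_refl; split; auto.
    intros j Hj. destruct (Nat.eqb_spec j i); congruence.
  - destruct (IHk (upd s i (true :: s i))) as [s' [E [H1 H2]]].
    exists s'; split. replace (S (S k)) with (1 + S k)%nat by lia. econstructor; eauto. constructor.
    split. rewrite H1; unfold upd; rewrite Nat.eqb_refl. simpl.
    clear. generalize (s i). induction k; simpl; intros; auto. rewrite IHk. auto.
    intros j Hj. rewrite H2; auto. unfold upd. destruct (Nat.eqb_spec j i); congruence.
Qed.

Lemma bounded_runs (H : list bool -> nat -> Prop) :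
  (forall x, exists n, H x n) -> forall m, exists B, forall x, (length x <= m)%nat -> exists n, H x n /\ (n <= B)%nat.
Proof.
  intros HH m. revert H HH. induction m; intros H HH.
  - destruct (HH []) as [n Hn]. exists n. intros x Hx. destruct x; simpl in Hx; [|lia]. exists n; auto.
  - destruct (HH []) as [n Hn].
    destruct (IHm (fun y => H (true :: y))) as [B1 HB1]; [intros; apply HH|].
    destruct (IHm (fun y => H (false :: y))) as [B2 HB2]; [intros; apply HH|].
    exists (n + B1 + B2)%nat. intros x Hx. destruct x as [|[] y]; simpl in Hx.
    + exists n; split; auto; lia.
    + destruct (HB1 y) as [n' [? ?]]; [lia|]. exists n'; split; auto; lia.
    + destruct (HB2 y) as [n' [? ?]]; [lia|]. exists n'; split; auto; lia.
Qed.
Open Scope R_scope.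

Lemma real_bound (L T q r1 B C beta e X nR nA : R) (d : nat) :
  1 <= L -> 0 <= T -> 0 <= q -> 0 <= r1 -> 0 <= B -> 0 < X ->
  INR (S d) + 1 <= beta -> e = / INR (S d) * beta ->
  nR <= T * (L + 1) ^ d ->
  X <= 1 + L + q + r1 + nR ->
  nA <= B + Rabs C * Rpower X e ->
  q + 1 + (r1 + 1 + (nR + (1 + (nA + 1)))) <=
  (q + r1 + 4 + T * 2 ^ d + B + Rabs C * Rpower (2 + q + r1 + T * 2 ^ d) e) * Rpower L beta.
Proof.
  intros HL HT Hq Hr HB HX Hb He HnR HXb HnA.
  assert (HSd : 0 < INR (S d)) by (apply lt_0_INR; lia).
  assert (He0 : 0 <= e) by (rewrite He; apply Rmult_le_pos; [apply Rlt_le, Rinv_0_lt_compat; auto| lra]).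
  assert (HLd : 1 <= L ^ d) by (apply pow_R1_Rle; auto).
  assert (H2d : 1 <= 2 ^ d) by (apply pow_R1_Rle; lra).
  assert (HL1 : (L + 1) ^ d <= 2 ^ d * L ^ d).
  { rewrite <- Rpow_mult_distr. apply pow_incr. lra. }
  assert (HP1 : 1 <= Rpower L beta).
  { rewrite <- (Rpower_O L) by lra. apply Rle_Rpower; lra. }
  assert (HPd : L ^ d <= Rpower L beta).
  { rewrite <- Rpower_pow by lra. apply Rle_Rpower; auto. rewrite S_INR in Hb. lra. }
  assert (HLS : L ^ d <= L ^ S d /\ L <= L ^ S d /\ 1 <= L ^ S d).
  { simpl. split; [|split]; nra. }
  set (K1 := 2 + q + r1 + T * 2 ^ d).
  assert (HXK : X <= K1 * L ^ S d).
  { unfold K1. assert (T * (L + 1) ^ d <= T * 2 ^ d * L ^ d) by (rewrite Rmult_assoc; apply Rmult_le_compat_l; auto).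
    destruct HLS as [? [? ?]].
    assert (T * 2 ^ d * L ^ d <= T * 2 ^ d * L ^ S d) by (apply Rmult_le_compat_l; nra).
    nra. }
  assert (HK1 : 0 < K1) by (unfold K1; nra).
  assert (HPX : Rpower X e <= Rpower K1 e * Rpower L beta).
  { eapply Rle_trans. apply Rle_Rpower_l; [auto| split; [auto|exact HXK]].
    rewrite <- Rpower_mult_distr; [|auto|nra].
    rewrite <- Rpower_pow by lra. rewrite Rpower_mult. rewrite He.
    rewrite <- Rmult_assoc, Rinv_r, Rmult_1_l by lra. lra. }
  assert (HPK : 0 <= Rpower K1 e) by (unfold Rpower; left; apply exp_pos).
  assert (HCa : 0 <= Rabs C) by apply Rabs_pos.
  assert (nA <= B * Rpower L beta + Rabs C * Rpower K1 e * Rpower L beta).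
  { rewrite Rmult_assoc. assert (Rabs C * Rpower X e <= Rabs C * (Rpower K1 e * Rpower L beta)) by (apply Rmult_le_compat_l; auto). nra. }
  assert (nR <= T * 2 ^ d * Rpower L beta).
  { eapply Rle_trans; [exact HnR|]. rewrite Rmult_assoc. apply Rmult_le_compat_l; auto.
    eapply Rle_trans; [exact HL1|]. apply Rmult_le_compat_l; lra. }
  fold K1. nra.
Qed.

Theorem proposition3 (f g : nat -> nat) (beta : nat -> R) (P0 P1 : opt_problem) :
  tends_to_infty_nat f -> tends_to_infty_nat g -> tends_to_infty_R beta ->
  fpt_gap_reducible P0 P1 f g ->
  weakly_inherently_enumerative P0 beta ->
  exists c : R, 0 < c /\
    weakly_inherently_enumerative P1 (fun r => c * beta (g r)).
Proof.
  intros Hf Hg Hb [Red [t [d [_ Hred]]]] [R0 [HR0 HP0]].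
  assert (HSd : 0 < INR (S d)) by (apply lt_0_INR; lia).
  exists (/ INR (S d)). split; [apply Rinv_0_lt_compat; auto|].
  destruct (Hb (INR (S d) + 1)) as [Nb HNb].
  destruct (Hg (Nat.max R0 Nb)) as [Ng HNg].
  exists (S Ng). split; [lia|].
  intros q1 r1 Hr1 Hq1r1 [A [C [n0 HA]]].
  set (G := g r1) in *.
  assert (HG : (R0 <= G /\ Nb <= G)%nat) by (specialize (HNg r1 ltac:(lia)); unfold G; lia).
  assert (HbG : INR (S d) + 1 <= beta G) by (apply HNb; lia).
  destruct (Hf q1) as [Nf HNf].
  set (q := Nat.max G Nf).
  apply (HP0 q G); [lia|unfold q; lia|].
  set (K := (maxreg Red + 3)%nat).
  exists (CSeq (consq 1 q) (CSeq (consq 2 r1) (CSeq Red (CSeq (CCopy K 0)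
            (CSeq (sh K A) (CCopy 0 K)))))).
  set (m0 := Nat.max n0 1).
  destruct (bounded_runs (fun x n => exists s, exec A (init1 x) s n /\
      ((OPT P1 x < r1)%nat -> hd false (s 0%nat) = false) /\
      ((q1 <= OPT P1 x)%nat -> hd false (s 0%nat) = true)))
    with (m := m0) as [B HB].
  { intro x. destruct (HA x) as [s [n [E [H1 [H2 _]]]]]. exists n, s; auto. }
  set (T := t q r1).
  exists (INR q + INR r1 + 4 + INR T * 2 ^ d + INR B +
     Rabs C * Rpower (2 + INR q + INR r1 + INR T * 2 ^ d) (/ INR (S d) * beta G)), 1%nat.
  intro I.
  destruct (consq_exec 1 q (init1 I)) as [s1 [E1 [H11 H12]]].
  destruct (consq_exec 2 r1 s1) as [s2 [E2 [H21 H22]]].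
  assert (Hs2 : s2 = init3 I (unary q) (unary r1)).
  { apply functional_extensionality. intro j.
    destruct j as [|[|[|j]]]; simpl.
    - rewrite H22, H12 by lia. reflexivity.
    - rewrite H22 by lia. rewrite H11. simpl. apply app_nil_r.
    - rewrite H21, H12 by lia. simpl. apply app_nil_r.
    - rewrite H22, H12 by lia. reflexivity. }
  subst s2.
  destruct (Hred I q r1) as [sR [nR [ER [HnR [HR1 HR2]]]]].
  fold T in HnR.
  set (out := sR 0%nat).
  assert (HA' : exists sA nA, exec A (init1 out) sA nA /\
      ((OPT P1 out < r1)%nat -> hd false (sA 0%nat) = false) /\
      ((q1 <= OPT P1 out)%nat -> hd false (sA 0%nat) = true) /\
      INR nA <= INR B + Rabs C * Rpower (INR (Nat.max 1 (length out))) (/ INR (S d) * beta G)).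
  { assert (HP : 0 < Rpower (INR (Nat.max 1 (length out))) (/ INR (S d) * beta G)) by apply exp_pos.
    assert (0 <= Rabs C) by apply Rabs_pos.
    destruct (le_lt_dec (length out) m0) as [Hs|Hl].
    - destruct (HB out Hs) as [nA [[sA [E [X1 X2]]] Hn]]. exists sA, nA. repeat split; auto.
      apply le_INR in Hn. assert (0 <= Rabs C * Rpower (INR (Nat.max 1 (length out))) (/ INR (S d) * beta G)) by (apply Rmult_le_pos; lra). lra.
    - destruct (HA out) as [sA [nA [E [X1 [X2 X3]]]]]. exists sA, nA. repeat split; auto.
      rewrite Nat.max_r by lia. eapply Rle_trans; [apply X3; unfold m0 in Hl; lia|].
      assert (0 <= INR B) by apply pos_INR.
      assert (C * Rpower (INR (length out)) (/ INR (S d) * beta G) <=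
              Rabs C * Rpower (INR (length out)) (/ INR (S d) * beta G)).
      { apply Rmult_le_compat_r; [left; apply exp_pos | apply Rle_abs]. }
      lra. }
  destruct HA' as [sA [nA [EA [HA1 [HA2 HAt]]]]].
  set (sc := upd sR K out).
  destruct (sh_exec K A (init1 out) sA nA EA sc) as [s' [E' H']].
  { intro j. unfold sc, upd. destruct (Nat.eqb_spec (j + K) K).
    - assert (j = 0%nat) by lia. subst. reflexivity.
    - rewrite (exec_unch _ _ _ _ ER) by (unfold K; lia).
      destruct j; [lia|]. unfold K.
      replace (S j + (maxreg Red + 3))%nat with (S (S (S (S (j + maxreg Red)))))%nat by lia.
      reflexivity. }
  eexists; eexists; split.
  { econstructor; [exact E1|]. econstructor; [exact E2|]. econstructor; [exact ER|].
    econstructor; [constructor|]. econstructor; [exact E'|]. constructor. }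
  assert (Hfin : upd s' 0 (s' K) 0%nat = sA 0%nat).
  { unfold upd. simpl. apply (H' 0%nat). }
  rewrite Hfin. split; [|split].
  - intro Hlt. apply HA1. apply HR2; [lia|unfold out in Hlt; exact Hlt].
  - intro Hle. apply HA2. specialize (HNf q ltac:(unfold q; lia)).
    assert (Hq0 : (0 < q)%nat) by (unfold q; lia); specialize (HR1 Hq0 Hle). unfold out; lia.
  - intro HI.
    assert (Hlen : (length out <= (length I + q + r1) + nR)%nat).
    { apply (exec_len _ _ _ _ ER). intro y. destruct y as [|[|[|y]]]; simpl;
      unfold unary; rewrite ?repeat_length; lia. }
    assert (HnRr : INR nR <= INR T * (INR (length I) + 1) ^ d).
    { apply le_INR in HnR. rewrite mult_INR, pow_INR, S_INR in HnR. lra. }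
    assert (HX : INR (Nat.max 1 (length out)) <= 1 + INR (length I) + INR q + INR r1 + INR nR).
    { assert (Nat.max 1 (length out) <= 1 + length I + q + r1 + nR)%nat by (clear -Hlen; lia).
      apply le_INR in H. rewrite !plus_INR in H. rewrite INR_1 in H. lra. }
    rewrite !plus_INR. simpl (INR 1).
    rewrite !S_INR.
    apply real_bound with (X := INR (Nat.max 1 (length out))) (nR := INR nR); auto.
    + apply le_INR in HI. simpl in HI. exact HI.
    + apply pos_INR.
    + apply pos_INR.
    + apply pos_INR.
    + apply pos_INR.
    + apply lt_0_INR. lia.
    + rewrite S_INR; reflexivity.
    + rewrite <- S_INR; exact HAt.
Qed.
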